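(* Consider a one-dimensional chain of qudits of local dimension $d$ decomposed into three consecutive regions $\tilde L$, $S$, $\tilde R$ (left to right), where $S$ consists of $\ell$ sites labeled $1,\dots,\ell$ with $\ell$ even. Let $H_S=\sum_{i=1}^{\ell-1}h_{i,i+1}$, where each $h_{i,i+1}$ acts only on sites $i,i+1$ of $S$. Let $m,M$ be positive integers, $\mathcal G_m$ an arbitrary polynomial of degree $m$, and $\Phi_1,\Phi_2$ operators supported on $\tilde L$ and $\tilde R$ respectively. Then the operator $\hat{\mathcal G}_{m,M}=[\Phi_1\mathcal G_m(H_S)\Phi_2]^M$ satisfies $$\mathrm{SR}(\hat{\mathcal G}_{m,M})\le(10mMd)^{2M+3\ell+\frac{4mM}{\ell}},$$ where the Schmidt rank is taken across the bipartition of the whole chain between sites $\ell/2$ and $\ell/2+1$ of $S$.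
   Context: The Schmidt rank of an operator $O$ across a bipartition $A|B$ of the chain is the minimal $r$ such that $O=\sum_{k=1}^r O_{A,k}\otimes O_{B,k}$ with $O_{A,k}$ acting on $A$ and $O_{B,k}$ on $B$. *)

(* Defs.v *)
From HB Require Import structures.
From mathcomp Require Import all_boot all_order all_algebra.
From mathcomp Require Import complex.
Set Implicit Arguments. Unset Strict Implicit. Unset Printing Implicit Defensive.
Import Order.TTheory GRing.Theory Num.Theory.
Local Open Scope ring_scope.

(* Configurations (computational basis states) of a chain of n qudits of
   local dimension d: site i carries the value x i in {0,...,d-1}. *)
Definition cfg (d n : nat) := {ffun 'I_n -> 'I_d}.

(* Operators on the chain Hilbert space (C^d)^{(x) n}: square matrices
   indexed by the basis configurations. *)
Definition op (C : Type) (d n : nat) := 'M[C]_(#|{: cfg d n}|).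

Definition ent (C : Type) (d n : nat) (O : op C d n) (x y : cfg d n) : C :=
  O (enum_rank x) (enum_rank y).

(* O is supported on the set of sites X, i.e. O = O_X (x) Id_{complement of X}:
   matrix elements vanish unless x and y agree off X, and otherwise depend
   only on the restrictions of x, y to X. *)
Definition supported_on (C : comNzRingType) (d n : nat) (X : {set 'I_n})
    (O : op C d n) : Prop :=
  forall x y x' y' : cfg d n,
    (forall i, i \in X -> x i = x' i /\ y i = y' i) ->
    (forall i, i \notin X -> x' i = y' i) ->
    ent O x y = (if [forall i in ~: X, x i == y i] then ent O x' y' else 0).

Definition mxpow (C : comNzRingType) (N : nat) (A : 'M[C]_N) (k : nat) : 'M[C]_N :=
  iter k (mulmx A) 1%:M.

Definition poly_mx (C : comNzRingType) (N : nat) (p : {poly C}) (A : 'M[C]_N)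
    : 'M[C]_N :=
  \sum_(k < size p) p`_k *: mxpow A k.

(* O has an operator Schmidt decomposition with r terms across the
   bipartition A | complement of A:  O = sum_{k<r} O_{A,k} O_{B,k} with
   O_{A,k} acting on A and O_{B,k} acting on the complement (so that the
   product is the tensor product O_{A,k} (x) O_{B,k}). *)
Definition schmidt_decomp (C : comNzRingType) (d n : nat) (A : {set 'I_n})
    (O : op C d n) (r : nat) : Prop :=
  exists (OA OB : 'I_r -> op C d n),
    [/\ forall k, supported_on A (OA k),
        forall k, supported_on (~: A) (OB k) &
        O = \sum_(k < r) OA k *m OB k].

(* Schmidt rank <= s  iff  some decomposition with r <= s terms exists. *)

(* Main.v *)
Require Import Defs.
From HB Require Import structures.
From mathcomp Require Import all_boot all_order all_algebra.
From mathcomp Require Import complex.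
From mathcomp Require Import zify.
Import Order.TTheory GRing.Theory Num.Theory.
Local Open Scope ring_scope.

Definition agree {d n : nat} (X : {set 'I_n}) (x y : cfg d n) : bool :=
  [forall i in X, x i == y i].

Definition mix {d n : nat} (X : {set 'I_n}) (u w : cfg d n) : cfg d n :=
  [ffun i => if i \in X then u i else w i].

Definition U {C : comNzRingType} {d n : nat} (X : {set 'I_n}) (u v : cfg d n)
  : op C d n :=
  \matrix_(i, j) (if [&& agree X (enum_val i) u, agree X (enum_val j) v
                       & agree (~: X) (enum_val i) (enum_val j)] then 1 else 0).

Lemma entU {C : comNzRingType} {d n : nat} (X : {set 'I_n}) (u v x y : cfg d n) :
  ent (U (C:=C) X u v) x y =
  if [&& agree X x u, agree X y v & agree (~: X) x y] then 1 else 0.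
Proof. by rewrite /ent mxE !enum_rankK. Qed.

Lemma ent_mul {C : comNzRingType} {d n : nat} (A B : op C d n) x y :
  ent (A *m B) x y = \sum_z ent A x z * ent B z y.
Proof.
rewrite /ent mxE (reindex enum_rank) //=; last first.
  by exists enum_val => z _; rewrite ?enum_rankK ?enum_valK.
Qed.

Lemma ent1 {C : comNzRingType} {d n : nat} x y :
  ent (1%:M : op C d n) x y = (x == y)%:R.
Proof. by rewrite /ent mxE (inj_eq enum_rank_inj). Qed.

Lemma entD {C : comNzRingType} {d n : nat} (A B : op C d n) x y :
  ent (A + B) x y = ent A x y + ent B x y.
Proof. by rewrite /ent mxE. Qed.

Lemma entZ {C : comNzRingType} {d n : nat} c (A : op C d n) x y :
  ent (c *: A) x y = c * ent A x y.
Proof. by rewrite /ent mxE. Qed.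

Lemma ent0 {C : comNzRingType} {d n : nat} x y :
  ent (0 : op C d n) x y = 0.
Proof. by rewrite /ent mxE. Qed.

Lemma agreeP {d n : nat} (X : {set 'I_n}) (x y : cfg d n) :
  reflect (forall i, i \in X -> x i = y i) (agree X x y).
Proof.
apply: (iffP forall_inP) => H i Hi; first by apply/eqP; apply: H.
by apply/eqP; apply: H.
Qed.

Lemma mixE {d n : nat} (X : {set 'I_n}) (u w : cfg d n) i :
  mix X u w i = if i \in X then u i else w i.
Proof. by rewrite ffunE. Qed.

Lemma supp0 {C : comNzRingType} {d n : nat} X : supported_on X (0 : op C d n).
Proof. by move=> x y x' y' _ _; rewrite !ent0; case: ifP. Qed.

Lemma suppD {C : comNzRingType} {d n : nat} X (A B : op C d n) :
  supported_on X A -> supported_on X B -> supported_on X (A + B).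
Proof.
move=> HA HB x y x' y' H1 H2; rewrite !entD (HA _ _ x' y') // (HB _ _ x' y') //.
by case: ifP; rewrite ?addr0.
Qed.

Lemma suppZ {C : comNzRingType} {d n : nat} X c (A : op C d n) :
  supported_on X A -> supported_on X (c *: A).
Proof.
move=> HA x y x' y' H1 H2; rewrite !entZ (HA _ _ x' y') //.
by case: ifP; rewrite ?mulr0.
Qed.

Lemma suppS {C : comNzRingType} {d n : nat} X (I : finType) (F : I -> op C d n) :
  (forall i, supported_on X (F i)) -> supported_on X (\sum_i F i).
Proof.
move=> H; apply: (big_ind (supported_on X)) => //; [exact: supp0 | exact: suppD].
Qed.
Lemma agree_sym {d n : nat} (X : {set 'I_n}) (x y : cfg d n) :
  agree X x y = agree X y x.
Proof. by apply/agreeP/agreeP => H i Hi; rewrite H. Qed.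

Lemma agree_refl {d n : nat} (X : {set 'I_n}) (x : cfg d n) : agree X x x.
Proof. by apply/agreeP. Qed.

Lemma agree_trans {d n : nat} (X : {set 'I_n}) (x y z : cfg d n) :
  agree X x y -> agree X y z -> agree X x z.
Proof. by move=> /agreeP H1 /agreeP H2; apply/agreeP => i Hi; rewrite H1 ?H2. Qed.
Arguments agree_trans {d n X x y z}.

Lemma agree_r {d n : nat} (X : {set 'I_n}) (x y z : cfg d n) :
  agree X y z -> agree X x y = agree X x z.
Proof.
move=> H; apply/idP/idP => H'; first exact: agree_trans H' H.
by apply: (agree_trans H'); rewrite agree_sym.
Qed.

Lemma agree_sub {d n : nat} (X Y : {set 'I_n}) (x y : cfg d n) :
  (forall i, i \in X -> i \in Y) -> agree Y x y -> agree X x y.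
Proof. by move=> HXY /agreeP H; apply/agreeP => i /HXY /H. Qed.

Lemma agree_mixin {d n : nat} (X Y : {set 'I_n}) (v w t : cfg d n) :
  (forall i, i \in Y -> i \in X) -> agree Y (mix X v w) t = agree Y v t.
Proof.
move=> HYX; apply/agreeP/agreeP => H i Hi; have := H i Hi; by rewrite mixE HYX.
Qed.

Lemma agree_mixout {d n : nat} (X Y : {set 'I_n}) (v w t : cfg d n) :
  (forall i, i \in Y -> i \notin X) -> agree Y (mix X v w) t = agree Y w t.
Proof.
move=> HYX; apply/agreeP/agreeP => H i Hi; have := H i Hi;
  by rewrite mixE (negbTE (HYX i Hi)).
Qed.

Lemma mix_uniq {d n : nat} (X : {set 'I_n}) (z v x : cfg d n) :
  agree X z v -> agree (~: X) z x -> z = mix X v x.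
Proof.
move=> /agreeP H1 /agreeP H2; apply/ffunP => i; rewrite mixE.
case: ifP => Hi; first exact: H1.
by apply: H2; rewrite in_setC Hi.
Qed.

Arguments mix_uniq {d n X z v x}.

Lemma sum_uniq {C : comNzRingType} {I : finType} (F : I -> C) w :
  (forall z, z != w -> F z = 0) -> \sum_z F z = F w.
Proof. by move=> H; rewrite (bigD1 w) //= big1 ?addr0 // => z /H. Qed.

Lemma entU' {C : comNzRingType} {d n : nat} (X : {set 'I_n}) (u v x y : cfg d n) :
  ent (U (C:=C) X u v) x y =
  ([&& agree X x u, agree X y v & agree (~: X) x y] : nat)%:R.
Proof. by rewrite entU; case: ifP. Qed.

Lemma ent_ext {C : comNzRingType} {d n : nat} (A B : op C d n) :
  (forall x y, ent A x y = ent B x y) -> A = B.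
Proof.
move=> H; apply/matrixP => i j; have := H (enum_val i) (enum_val j).
by rewrite /ent !enum_valK.
Qed.

Lemma ent_sum {C : comNzRingType} {d n : nat} (I : finType) (F : I -> op C d n) x y :
  ent (\sum_i F i) x y = \sum_i ent (F i) x y.
Proof. by rewrite /ent summxE. Qed.

Lemma U_mul_same {C : comNzRingType} {d n : nat} (X : {set 'I_n}) (u v u' v' : cfg d n) :
  U (C:=C) X u v *m U X u' v' = (agree X v u' : nat)%:R *: U X u v'.
Proof.
apply: ent_ext => x y; rewrite ent_mul entZ entU'.
rewrite (sum_uniq _ (mix X v x)).
  rewrite !entU' -!natrM; congr (_%:R).
  rewrite agree_mixin // [agree X v v]agree_refl [agree (~: X) x _]agree_sym.
  rewrite agree_mixout ?agree_refl; last by move=> i; rewrite in_setC.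
  rewrite agree_mixin // agree_mixout; last by move=> i; rewrite in_setC.
  by case: (agree X x u); case: (agree X v u'); case: (agree X y v');
     case: (agree (~: X) x y).
move=> z Hz; rewrite !entU'.
case E: (agree X z v); case E2: (agree (~: X) x z); rewrite ?andbF ?mul0r //.
by rewrite agree_sym in E2; rewrite -(mix_uniq E E2) eqxx in Hz.
Qed.

Lemma agreeU {d n : nat} (X Y : {set 'I_n}) (x y : cfg d n) :
  agree (X :|: Y) x y = agree X x y && agree Y x y.
Proof.
apply/agreeP/andP => [H|[/agreeP H1 /agreeP H2]].
  by split; apply/agreeP => i Hi; apply: H; rewrite in_setU Hi ?orbT.
by move=> i; rewrite in_setU => /orP[/H1|/H2].
Qed.

Lemma U_mul_disj {C : comNzRingType} {d n : nat} (X Y : {set 'I_n})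
  (u v u' v' : cfg d n) :
  (forall i, i \in X -> i \notin Y) ->
  U (C:=C) X u v *m U Y u' v' = U (X :|: Y) (mix X u u') (mix X v v').
Proof.
move=> HXY.
have HYX : forall i, i \in Y -> i \notin X.
  by move=> i Hi; apply/negP => /HXY; rewrite Hi.
apply: ent_ext => x y; rewrite ent_mul entU'.
rewrite (sum_uniq _ (mix X v x)).
  rewrite !entU' -!natrM; congr (_%:R).
  rewrite agree_mixin // [agree X v v]agree_refl [agree (~: X) x _]agree_sym.
  rewrite agree_mixout ?agree_refl; last by move=> i; rewrite in_setC.
  rewrite agree_mixout //.
  have -> : agree (~: Y) (mix X v x) y = agree X y v && agree (~: (X :|: Y)) x y.
    apply/agreeP/andP => [H|[/agreeP H1 /agreeP H2] i].
      split; apply/agreeP => i Hi.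
        have := H i; rewrite mixE Hi in_setC (negbTE (HXY i Hi)) => ->//.
      move: Hi; rewrite in_setC in_setU negb_or => /andP[Hx Hy].
      by have := H i; rewrite mixE (negbTE Hx) in_setC Hy => ->.
    rewrite in_setC mixE => Hy; case: ifP => Hx; first by rewrite H1.
    by apply: H2; rewrite in_setC in_setU Hx (negbTE Hy).
  rewrite !agreeU ![agree _ x (mix _ _ _)]agree_sym ![agree _ y (mix _ _ _)]agree_sym.
  rewrite agree_mixin // agree_mixout // agree_mixin // agree_mixout //.
  rewrite (agree_sym X u x) (agree_sym Y u' x) (agree_sym X v y) (agree_sym Y v' y).
  by case: (agree X x u); case: (agree X y v); case: (agree Y x u');
     case: (agree Y y v'); case: (agree (~: (X :|: Y)) x y).
move=> z Hz; rewrite !entU'.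
case E: (agree X z v); case E2: (agree (~: X) x z); rewrite ?andbF ?mul0r //.
by rewrite agree_sym in E2; rewrite -(mix_uniq E E2) eqxx in Hz.
Qed.


Lemma agree_l {d n : nat} (X : {set 'I_n}) (x x' y : cfg d n) :
  agree X x x' -> agree X x y = agree X x' y.
Proof.
move=> H; apply/idP/idP => H'; last exact: agree_trans H H'.
by apply: agree_trans _ H'; rewrite agree_sym.
Qed.


Lemma U_supp {C : comNzRingType} {d n : nat} (X Y : {set 'I_n}) (u v : cfg d n) :
  (forall i, i \in X -> i \in Y) -> supported_on Y (U (C:=C) X u v).
Proof.
move=> HXY x y x' y' H1 H2; rewrite -/(agree (~: Y) x y) !entU'.
rewrite (@agree_l _ _ X x x'); last by apply/agreeP => i Hi; exact: (H1 i (HXY i Hi)).1.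
rewrite (@agree_l _ _ X y y'); last by apply/agreeP => i Hi; exact: (H1 i (HXY i Hi)).2.
have -> : agree (~: X) x y = agree (~: Y) x y && agree (~: X) x' y'.
  apply/agreeP/andP => [H|[/agreeP Ha /agreeP Hb] i].
    split; apply/agreeP => i; rewrite in_setC => Hi.
      by apply: H; rewrite in_setC; apply/negP => /HXY; rewrite (negbTE Hi).
    case: (boolP (i \in Y)) => HiY; last by apply: H2.
    have [<- <-] := H1 i HiY; apply: H; by rewrite in_setC.
  rewrite in_setC => Hi; case: (boolP (i \in Y)) => HiY; last first.
    by apply: Ha; rewrite in_setC.
  have [-> ->] := H1 i HiY; by apply: Hb; rewrite in_setC.
by case: (agree (~: Y) x y); rewrite ?andbF.
Qed.

Lemma supp1 {C : comNzRingType} {d n : nat} (Y : {set 'I_n}) :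
  supported_on Y (1%:M : op C d n).
Proof.
move=> x y x' y' H1 H2; rewrite -/(agree (~: Y) x y) !ent1.
case: ifP => Hxy; last first.
  case: eqP => // Exy; by rewrite Exy agree_refl in Hxy.
suff -> : (x == y) = (x' == y') by [].
apply/idP/idP => /eqP E; apply/eqP; apply/ffunP => i.
  case: (boolP (i \in Y)) => Hi; last by apply: H2.
  by have [<- <-] := H1 i Hi; rewrite E.
case: (boolP (i \in Y)) => Hi; first by have [-> ->] := H1 i Hi; rewrite E.
by move/agreeP: Hxy; apply; rewrite in_setC.
Qed.

Lemma span_supp {C : comNzRingType} {d n : nat} (X : {set 'I_n}) (O : op C d n)
  (K : finType) (e : K -> cfg d n) (z0 : cfg d n) :
  supported_on X O ->
  (forall p i, i \notin X -> e p i = z0 i) ->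
  (forall x, exists p, agree X (e p) x) ->
  (forall p q, agree X (e p) (e q) -> p = q) ->
  O = \sum_(s : K * K) ent O (e s.1) (e s.2) *: U X (e s.1) (e s.2).
Proof.
move=> HO H1 H2 H3; apply: ent_ext => x y; rewrite ent_sum.
have [p Hp] := H2 x; have [q Hq] := H2 y.
rewrite (sum_uniq _ (p, q)) /=.
  rewrite entZ entU' (agree_sym X x) (agree_sym X y) Hp Hq /=.
  rewrite (HO x y (e p) (e q)).
  - by rewrite -/(agree (~: X) x y); case: ifP; rewrite ?mulr1 ?mulr0.
  - by move=> i Hi; move/agreeP: Hp => Hp; move/agreeP: Hq => Hq; rewrite Hp ?Hq.
  - by move=> i Hi; rewrite !H1.
move=> [p' q'] Hs; rewrite entZ entU' /=.
case E1: (agree X x (e p')); case E2: (agree X y (e q')); rewrite ?mulr0 //=.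
move: Hs; suff [-> ->] : p' = p /\ q' = q by rewrite eqxx.
split; apply: H3; rewrite agree_sym.
  by apply: (agree_trans Hp).
by apply: (agree_trans Hq).
Qed.

Lemma supp_span {C : comNzRingType} {d n : nat} (X : {set 'I_n}) (O : op C d n)
  (z0 : cfg d n) : supported_on X O ->
  exists (K : finType) (e : K -> cfg d n) (c : K * K -> C),
    O = \sum_(s : K * K) c s *: U X (e s.1) (e s.2).
Proof.
move=> HO.
pose K := {x : cfg d n | agree (~: X) x z0}.
pose e := fun p : K => val p.
exists K, e, (fun s => ent O (e s.1) (e s.2)).
apply: (@span_supp _ _ _ X O K e z0 HO).
- move=> p i Hi; have /agreeP := valP p; apply; by rewrite in_setC.
- move=> x; have Hm : agree (~: X) (mix X x z0) z0.
    by rewrite agree_mixout ?agree_refl // => i; rewrite in_setC.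
  exists (Sub (mix X x z0) Hm : K); rewrite /e SubK agree_mixin ?agree_refl //.
- move=> p q /agreeP H; apply: val_inj; apply/ffunP => i.
  case: (boolP (i \in X)) => Hi; first exact: H.
  have /agreeP Hp := valP p; have /agreeP Hq := valP q.
  by rewrite /= Hp ?Hq // in_setC.
Qed.

Arguments supp_span {C d n X O}.

Lemma supp_mono {C : comNzRingType} {d n : nat} (X Y : {set 'I_n}) (O : op C d n)
  (z0 : cfg d n) :
  (forall i, i \in X -> i \in Y) -> supported_on X O -> supported_on Y O.
Proof.
move=> HXY HO; have [K [e [c ->]]] := supp_span z0 HO.
by apply: suppS => s; apply: suppZ; apply: U_supp.
Qed.

Lemma supp_mul {C : comNzRingType} {d n : nat} (X : {set 'I_n}) (A B : op C d n)
  (z0 : cfg d n) :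
  supported_on X A -> supported_on X B -> supported_on X (A *m B).
Proof.
move=> HA HB; have [K [e [c ->]]] := supp_span z0 HA.
have [K' [e' [c' ->]]] := supp_span z0 HB.
rewrite mulmx_suml; apply: suppS => s; rewrite mulmx_sumr; apply: suppS => t.
rewrite -scalemxAl -scalemxAr U_mul_same.
by do 3 apply: suppZ; apply: U_supp.
Qed.

Lemma U_ext {C : comNzRingType} {d n : nat} (X : {set 'I_n}) (u v u' v' : cfg d n) :
  agree X u u' -> agree X v v' -> U (C:=C) X u v = U X u' v'.
Proof.
move=> Hu Hv; apply: ent_ext => x y; rewrite !entU'.
by rewrite (agree_r _ _ _ _ Hu) (agree_r _ _ _ _ Hv).
Qed.

Lemma supp_comm {C : comNzRingType} {d n : nat} (X Y : {set 'I_n}) (A B : op C d n)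
  (z0 : cfg d n) :
  (forall i, i \in X -> i \notin Y) ->
  supported_on X A -> supported_on Y B -> A *m B = B *m A.
Proof.
move=> HXY HA HB.
have HYX : forall i, i \in Y -> i \notin X.
  by move=> i Hi; apply/negP => /HXY; rewrite Hi.
have [K [e [c ->]]] := supp_span z0 HA.
have [K' [e' [c' ->]]] := supp_span z0 HB.
rewrite mulmx_suml; under eq_bigr do rewrite mulmx_sumr.
rewrite mulmx_suml; under [in RHS]eq_bigr do rewrite mulmx_sumr.
rewrite exchange_big; apply: eq_bigr => t _; apply: eq_bigr => s _.
rewrite -!scalemxAl -!scalemxAr !scalerA mulrC; congr (_ *: _).
rewrite !U_mul_disj // setUC; apply: U_ext; apply/agreeP => i;
  rewrite in_setU !mixE => /orP[Hi|Hi];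
  by first [rewrite Hi (negbTE (HXY i Hi)) | rewrite Hi (negbTE (HYX i Hi))].
Qed.

Arguments supp_mono {C d n X Y O}.
Arguments supp_mul {C d n X A B}.
Arguments supp_comm {C d n X Y A B}.

Lemma mxpowS {C : comNzRingType} {N : nat} (A : 'M[C]_N) k :
  mxpow A k.+1 = A *m mxpow A k.
Proof. by []. Qed.

Lemma supp_pow {C : comNzRingType} {d n : nat} (X : {set 'I_n}) (A : op C d n)
  (z0 : cfg d n) k : supported_on X A -> supported_on X (mxpow A k).
Proof.
move=> HA; elim: k => [|k IH]; first exact: supp1.
by rewrite mxpowS; apply: supp_mul z0 HA IH.
Qed.

Arguments supp_pow {C d n X A}.

Lemma supp_poly {C : comNzRingType} {d n : nat} (X : {set 'I_n}) (A : op C d n)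
  (z0 : cfg d n) p : supported_on X A -> supported_on X (poly_mx p A).
Proof.
move=> HA; rewrite /poly_mx; apply: suppS => k; apply: suppZ; exact: supp_pow.
Qed.

Theorem lemma16 (R : rcfType) (d a l b m M : nat)
  (h : 'I_(l.-1) -> op R[i] d (a + l + b))
  (G : {poly R[i]})
  (Phi1 Phi2 : op R[i] d (a + l + b)) :
  (0 < d)%N -> (0 < l)%N -> ~~ odd l -> (0 < m)%N -> (0 < M)%N ->
  (forall i : 'I_(l.-1),
     supported_on [set j : 'I_(a + l + b) | (nat_of_ord j == a + i)%N
                                          || (nat_of_ord j == a + i + 1)%N]
                  (h i)) ->
  size G = m.+1 ->
  supported_on [set j : 'I_(a + l + b) | (j < a)%N] Phi1 ->
  supported_on [set j : 'I_(a + l + b) | (a + l <= j)%N] Phi2 ->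
  exists r : nat,
    schmidt_decomp [set j : 'I_(a + l + b) | (j < a + l./2)%N]
      (mxpow (Phi1 *m poly_mx G (\sum_(i < l.-1) h i) *m Phi2) M) r
    /\ (r ^ l <= (10 * m * M * d) ^ (l * (2 * M + 3 * l) + 4 * m * M))%N.
Proof.
move=> Hd Hl Hev Hm HM Hh HG HP1 HP2.
pose z0 : cfg d (a + l + b) := [ffun => Ordinal Hd].
pose S := [set j : 'I_(a + l + b) | (a <= j < a + l)%N].
pose SA := [set j : 'I_(a + l + b) | (a <= j < a + l./2)%N].
pose SB := [set j : 'I_(a + l + b) | (a + l./2 <= j < a + l)%N].
have HhS : forall i, supported_on S (h i).
  move=> i; apply: (supp_mono z0 _ (Hh i)) => j; rewrite !inE.
  have := ltn_ord i; move=> Hi /orP[/eqP->|/eqP->]; apply/andP; split; lia.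
set P := poly_mx G _.
have HP : supported_on S P.
  by apply: supp_poly z0 _ _; apply: suppS.
have dLS : forall j, j \in [set j : 'I_(a + l + b) | (j < a)%N] -> j \notin S.
  by move=> j; rewrite !inE => H; apply/negP => /andP[H1 H2]; lia.
have dSR : forall j, j \in S -> j \notin [set j : 'I_(a + l + b) | (a + l <= j)%N].
  by move=> j; rewrite !inE => /andP[H1 H2]; apply/negP => H; lia.
have dRL : forall j, j \in [set j : 'I_(a + l + b) | (a + l <= j)%N] ->
                     j \notin [set j : 'I_(a + l + b) | (j < a)%N].
  by move=> j; rewrite !inE => H; apply/negP => H'; lia.
have Hpow : forall k, mxpow (Phi1 *m P *m Phi2) k =
                      mxpow Phi1 k *m mxpow P k *m mxpow Phi2 k.
  elim => [|k IH]; first by rewrite /= !mul1mx.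
  have c1 : Phi2 *m mxpow Phi1 k = mxpow Phi1 k *m Phi2.
    by apply: (supp_comm z0 dRL HP2); apply: supp_pow.
  have c2 : P *m mxpow Phi1 k = mxpow Phi1 k *m P.
    apply: (supp_comm z0 _ HP (supp_pow z0 k HP1)).
    by move=> j Hj; apply/negP => /dLS; rewrite Hj.
  have c3 : Phi2 *m mxpow P k = mxpow P k *m Phi2.
    apply: (supp_comm z0 _ HP2 (supp_pow z0 k HP)).
    by move=> j Hj; apply/negP => /dSR; rewrite Hj.
  rewrite !mxpowS IH !mulmxA.
  rewrite -(mulmxA (Phi1 *m P) Phi2) c1 mulmxA -(mulmxA Phi1 P) c2 mulmxA.
  by rewrite -(mulmxA (Phi1 *m mxpow Phi1 k *m P) Phi2) c3 !mulmxA.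
set Q := mxpow P M.
have HQ : supported_on S Q by apply: supp_pow.
have Hn : (0 < a + l + b)%N by lia.
pose o0 : 'I_l := Ordinal Hl.
pose i0 : 'I_(a + l + b) := Ordinal Hn.
pose e := fun u : cfg d l => [ffun i : 'I_(a + l + b) =>
   if (a <= i < a + l)%N then u (insubd o0 (i - a)%N) else z0 i] : cfg d (a + l + b).
have HQe := @span_supp _ _ _ S Q _ e z0 HQ.
have {HQe} HQe : Q = \sum_(s : cfg d l * cfg d l)
    ent Q (e s.1) (e s.2) *: U S (e s.1) (e s.2).
  apply: HQe.
  - by move=> p i; rewrite inE ffunE => /negbTE ->.
  - move=> x; exists [ffun j : 'I_l => x (insubd i0 (a + j)%N)].
    apply/agreeP => i; rewrite inE ffunE => Hi; rewrite Hi ffunE.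
    congr (x _); apply: val_inj => /=.
    rewrite val_insubd val_insubd /=.
    move/andP: Hi => [H1 H2].
    have -> : (i - a < l)%N by lia.
    have -> : (a + (i - a) < a + l + b)%N by lia.
    lia.
  - move=> p q /agreeP H; apply/ffunP => j.
    have Hj : (a + j < a + l + b)%N by have := ltn_ord j; lia.
    have := H (Ordinal Hj); rewrite inE !ffunE /=.
    have -> : (a <= a + j < a + l)%N by apply/andP; split; have := ltn_ord j; lia.
    have -> : insubd o0 (a + j - a)%N = j.
      by apply: val_inj; rewrite val_insubd /= addKn ltn_ord.
    by apply.
have hl2 : (l./2 <= l)%N by rewrite leq_half_double; lia.
have HSAB : forall j, j \in SA -> j \notin SB.
  by move=> j; rewrite !inE => /andP[H1 H2]; apply/negP => /andP[H3 H4]; lia.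
have HU : forall u v : cfg d (a + l + b), U (C:=R[i]) S u v = U SA u v *m U SB u v.
  move=> u v; rewrite U_mul_disj //.
  have -> : SA :|: SB = S.
    apply/setP => j; rewrite !inE; apply/idP/idP.
      by case/orP => /andP[H1 H2]; apply/andP; split; lia.
    move=> /andP[H1 H2]; case: (leqP (a + l./2) j) => H3.
      by rewrite orbC; apply/orP; left; apply/andP; split; lia.
    by apply/orP; left; apply/andP; split; lia.
  have mixK : forall w : cfg d (a + l + b), mix SA w w = w.
    by move=> w; apply/ffunP => j; rewrite mixE; case: ifP.
  by rewrite !mixK.
pose F1 := fun s : cfg d l * cfg d l =>
  mxpow Phi1 M *m (ent Q (e s.1) (e s.2) *: U SA (e s.1) (e s.2)).
pose F2 := fun s : cfg d l * cfg d l => U SB (e s.1) (e s.2) *m mxpow Phi2 M.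
exists #|{: cfg d l * cfg d l}|; split.
  exists (fun k => F1 (enum_val k)), (fun k => F2 (enum_val k)); split.
  - move=> k; apply: (supp_mul z0).
      apply: (supp_mono z0 _ (supp_pow z0 M HP1)).
      by move=> j; rewrite !inE; lia.
    apply: suppZ; apply: U_supp => j; rewrite !inE => /andP[H1 H2]; lia.
  - move=> k; apply: (supp_mul z0).
      by apply: U_supp => j; rewrite !inE => /andP[H1 H2]; rewrite -leqNgt.
    apply: (supp_mono z0 _ (supp_pow z0 M HP2)).
    by move=> j; rewrite !inE -leqNgt; lia.
  rewrite Hpow -/Q -(big_enum_val (fun s => F1 s *m F2 s)) /=.
  rewrite {1}HQe mulmx_sumr mulmx_suml; apply: eq_big => // s _.
  by rewrite /F1 /F2 HU scalemxAl !mulmxA.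
rewrite card_prod /cfg card_ffun !card_ord -expnD -expnM.
apply: (@leq_trans ((10 * m * M * d) ^ ((l + l) * l))).
  rewrite leq_exp2r; last by rewrite muln_gt0 addn_gt0 Hl.
  by apply: leq_pmull; rewrite !muln_gt0 Hm HM.
apply: leq_pexp2l; first by rewrite !muln_gt0 Hm HM Hd.
nia.
Qed.
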